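(* Let $T$ be a local, translation-invariant stochastic matrix on $\mathbb{Z}\times\{1,\dots,D\}$ with $\det X(k)\ne0$ for all $k\in[-\pi,\pi]$. Suppose there are positive numbers $\pi_1,\dots,\pi_D>0$ such that, setting $\pi_{i,a}=\pi_a$ for all $i$, the vector $\boldsymbol\pi=(\pi_{i,a})$ is a steady state, $T\boldsymbol\pi=\boldsymbol\pi$, and $T$ satisfies the detailed balance condition $$T_{i,a;j,b}\,\pi_{j,b}=T_{j,b;i,a}\,\pi_{i,a}\quad\text{for all } i,j,a,b .$$ Then $w(T,0)=0$.
   Context: States are pairs $(j,a)$, $j\in\mathbb{Z}$, $a\in\{1,\dots,D\}$. A stochastic matrix is a real matrix $T=(T_{i,a;j,b})$ with $T_{i,a;j,b}\ge0$ and $\sum_{i,a}T_{i,a;j,b}=1$ for all $(j,b)$. It is local if there are $C,\ell>0$ with $T_{i,a;j,b}\le Ce^{-|i-j|/\ell}$ for all sufficiently large $|i-j|$, and translation invariant if $T_{i+1,a;j+1,b}=T_{i,a;j,b}$. The Bloch matrix is $X(k)$ with $X_{a,b}(k)=\sum_{l\in\mathbb{Z}}T_{j+l,a;j,b}e^{-ikl}$, $k\in[-\pi,\pi]$, and $w(T,0)=\int_{-\pi}^{\pi}\frac{dk}{2\pi i}\partial_k\log\det X(k)\in\mathbb{Z}$. *)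

(* Defs.v *)
From Stdlib Require Import Reals ZArith.
From Coquelicot Require Import Coquelicot.
From mathcomp Require Import all_boot all_algebra.
From mathcomp Require Import Rstruct complex.

Set Implicit Arguments.
Unset Strict Implicit.
Unset Printing Implicit Defensive.

Import ComplexField.
Local Open Scope ring_scope.

(* A (real) matrix indexed by states (j,a), j : Z, a : 'I_D.
   T i a j b stands for T_{i,a; j,b}. *)
Definition ZMat (D : nat) := Z -> 'I_D -> Z -> 'I_D -> R.

Definition Zsum_is (f : Z -> R) (s : R) : Prop :=
  exists s1 s2 : R,
    is_series (fun n : nat => f (Z.of_nat n)) s1 /\
    is_series (fun n : nat => f (Z.opp (Z.of_nat (S n)))) s2 /\
    s = (s1 + s2)%R.

Definition ZSeries (f : Z -> R) : R :=
  (Series (fun n : nat => f (Z.of_nat n)) +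
   Series (fun n : nat => f (Z.opp (Z.of_nat (S n)))))%R.

Definition is_stochastic (D : nat) (T : ZMat D) : Prop :=
  (forall i a j b, (0 <= T i a j b)%R) /\
  (forall j b, Zsum_is (fun i => \sum_(a < D) T i a j b)%R 1%R).

Definition is_local (D : nat) (T : ZMat D) : Prop :=
  exists C l : R, (0 < C)%R /\ (0 < l)%R /\
    exists N : Z, forall i a j b, Z.le N (Z.abs (Z.sub i j)) ->
      (T i a j b <= C * exp (- IZR (Z.abs (Z.sub i j)) / l))%R.

Definition is_transl_inv (D : nat) (T : ZMat D) : Prop :=
  forall i a j b, T (Z.add i 1) a (Z.add j 1) b = T i a j b.

(* Bloch matrix X_{a,b}(k) = sum_l T_{j+l,a;j,b} e^{-ikl} (taken at j = 0),
   with e^{-ikl} = cos(kl) - i sin(kl). *)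
Definition Bloch_re (D : nat) (T : ZMat D) (k : R) (a b : 'I_D) : R :=
  ZSeries (fun l => T l a Z0 b * cos (k * IZR l))%R.

Definition Bloch_im (D : nat) (T : ZMat D) (k : R) (a b : 'I_D) : R :=
  ZSeries (fun l => - (T l a Z0 b * sin (k * IZR l)))%R.

Definition Bloch (D : nat) (T : ZMat D) (k : R) : 'M[R[i]]_D :=
  \matrix_(a < D, b < D) (Bloch_re T k a b +i* Bloch_im T k a b)%C.

Definition detBloch (D : nat) (T : ZMat D) (k : R) : R[i] :=
  \det (Bloch T k).

Definition detBloch_deriv (D : nat) (T : ZMat D) (k : R) : R[i] :=
  (Derive (fun k' => Re (detBloch T k')) k
     +i* Derive (fun k' => Im (detBloch T k')) k)%C.

Definition dlogdet (D : nat) (T : ZMat D) (k : R) : R[i] :=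
  (detBloch_deriv T k / detBloch T k)%R.

(* w(T,0) = \int_{-pi}^{pi} dk/(2 pi i) d/dk log det X(k) *)
Definition winding0 (D : nat) (T : ZMat D) : R[i] :=
  ((RInt (fun k => Re (dlogdet T k)) (- PI) PI
      +i* RInt (fun k => Im (dlogdet T k)) (- PI) PI)%C
   / (0 +i* (2 * PI))%C)%R.

(* Main.v *)
From Stdlib Require Import Reals ZArith Lra Lia Classical FunctionalExtensionality.
From Coquelicot Require Import Coquelicot.
Open Scope R_scope.

Lemma Mtest (g : nat -> R -> R) (M : nat -> R) D :
  (forall j x, Rabs (g j x) <= M j) -> ex_series M ->
  CVU_dom (fun n x => sum_n (fun j => g j x) n) D.
Proof.
intros Hb HM. apply CVU_dom_cauchy. intros eps.
destruct (Cauchy_ex_series M HM eps) as [N HN]. exists (S N).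
assert (Key : forall n m x, (m < n)%nat -> (S N <= m)%nat ->
   Rabs (sum_n (fun j => g j x) n - sum_n (fun j => g j x) m) < eps).
{ intros n m x Hmn Hm.
  assert (E : sum_n (fun j => g j x) n - sum_n (fun j => g j x) m = sum_n_m (fun j => g j x) (S m) n).
  { symmetry. exact (sum_n_m_sum_n (G:=R_AbelianGroup) (fun j => g j x) m n ltac:(lia)). }
  rewrite E.
  eapply Rle_lt_trans. apply (norm_sum_n_m (fun j => g j x)).
  eapply Rle_lt_trans. apply sum_n_m_le. intro k. apply (Hb k x).
  eapply Rle_lt_trans. apply Rle_abs.
  apply (HN (S m) n); lia. }
intros n m x _ Hn Hm.
destruct (lt_eq_lt_dec n m) as [[H|H]|H].
- rewrite Rabs_minus_sym. apply Key; lia.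
- subst. unfold Rminus. rewrite Rplus_opp_r, Rabs_R0. apply cond_pos.
- apply Key; lia.
Qed.

Lemma is_derive_Rplus (f g : R -> R) x df dg : is_derive f x df -> is_derive g x dg -> is_derive (fun t => f t + g t) x (df + dg).
Proof. intros H1 H2. exact (is_derive_plus f g x df dg H1 H2). Qed.
Lemma continuous_Rplus (f g : R -> R) x : continuous f x -> continuous g x -> continuous (fun t => f t + g t) x.
Proof. intros H1 H2. exact (continuous_plus f g x H1 H2). Qed.
Lemma continuous_Rmult (f g : R -> R) x : continuous f x -> continuous g x -> continuous (fun t => f t * g t) x.
Proof. intros H1 H2. exact (continuous_mult f g x H1 H2). Qed.

Section SerDeriv.
Variables (u m : nat -> R) (phi psi : R -> R).
Hypothesis Hd : forall x, is_derive phi x (psi x).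
Hypothesis Hc : forall x, continuous psi x.
Hypothesis Hb1 : forall x, Rabs (phi x) <= 1.
Hypothesis Hb2 : forall x, Rabs (psi x) <= 1.
Hypothesis Hs1 : ex_series (fun n => Rabs (u n)).
Hypothesis Hs2 : ex_series (fun n => Rabs (u n * m n)).

Let fn n x := sum_n (fun j => u j * phi (x * m j)) n.
Let dn n x := sum_n (fun j => u j * (m j * psi (x * m j))) n.

Lemma fn_deriv n x : is_derive (fn n) x (dn n x).
Proof.
unfold fn, dn. induction n.
- apply (is_derive_ext (fun x => u 0%nat * phi (x * m 0%nat))).
  { intro t. rewrite sum_O. reflexivity. }
  rewrite sum_O. apply is_derive_scal.
  assert (H := is_derive_comp phi (fun x => x * m 0%nat) x (psi (x * m 0%nat)) (m 0%nat) (Hd _)).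
  apply H. auto_derive. auto. ring.
- apply (is_derive_ext (fun x => sum_n (fun j => u j * phi (x * m j)) n + u (S n) * phi (x * m (S n)))).
  { intro t. rewrite sum_Sn. reflexivity. }
  rewrite sum_Sn. apply is_derive_Rplus. exact IHn.
  apply is_derive_scal.
  apply (is_derive_comp phi (fun x => x * m (S n)) x (psi (x * m (S n))) (m (S n)) (Hd _)).
  auto_derive. auto. ring.
Qed.

Lemma dn_cont n x : continuous (dn n) x.
Proof.
unfold dn. induction n.
- apply (continuous_ext (fun x => u 0%nat * (m 0%nat * psi (x * m 0%nat)))).
  { intro t. rewrite sum_O. reflexivity. }
  apply (continuous_Rmult (fun _ => u 0%nat)). apply continuous_const.
  apply (continuous_Rmult (fun _ => m 0%nat)). apply continuous_const.
  apply (continuous_comp (fun x => x * m 0%nat) psi). 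
  apply (continuous_Rmult (fun x => x) (fun _ => m 0%nat)). apply continuous_id. apply continuous_const.
  apply Hc.
- apply (continuous_ext (fun x => sum_n (fun j => u j * (m j * psi (x * m j))) n + u (S n) * (m (S n) * psi (x * m (S n))))).
  { intro t. rewrite sum_Sn. reflexivity. }
  apply (continuous_Rplus (fun x => sum_n (fun j => u j * (m j * psi (x * m j))) n)). exact IHn.
  apply (continuous_Rmult (fun _ => u (S n))). apply continuous_const.
  apply (continuous_Rmult (fun _ => m (S n))). apply continuous_const.
  apply (continuous_comp (fun x => x * m (S n)) psi). 
  apply (continuous_Rmult (fun x => x) (fun _ => m (S n))). apply continuous_id. apply continuous_const.
  apply Hc.
Qed.

Lemma ser_deriv k : ex_derive (fun k => Series (fun n => u n * phi (k * m n))) k.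
Proof.
assert (HD : forall n, Derive (fn n) = dn n).
{ intro n. apply functional_extensionality. intro x. apply is_derive_unique. apply fn_deriv. }
assert (Hconn : is_connected (fun _ : R => True)) by (unfold is_connected; intros; exact I).
assert (H1 : CVU_dom fn (fun _ => True)).
{ apply (Mtest (fun j x => u j * phi (x * m j)) (fun j => Rabs (u j))); [|exact Hs1].
  intros j x. rewrite Rabs_mult. specialize (Hb1 (x * m j)).
  pose proof (Rabs_pos (u j)). nra. }
assert (H2 : forall n x, True -> ex_derive (fn n) x).
{ intros n x _. eexists. apply fn_deriv. }
assert (H3 : forall n x, True -> continuity_pt (Derive (fn n)) x).
{ intros n x _. rewrite HD. apply continuity_pt_filterlim. apply dn_cont. }
assert (H4 : CVU_dom (fun n x => Derive (fn n) x) (fun _ => True)).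
{ replace (fun n x => Derive (fn n) x) with dn.
  2:{ apply functional_extensionality; intro n. rewrite HD. reflexivity. }
  apply (Mtest (fun j x => u j * (m j * psi (x * m j))) (fun j => Rabs (u j * m j))); [|exact Hs2].
  intros j x. replace (u j * (m j * psi (x * m j))) with ((u j * m j) * psi (x * m j)) by ring. rewrite Rabs_mult. specialize (Hb2 (x * m j)).
  pose proof (Rabs_pos (u j * m j)). nra. }
assert (H := CVU_Derive fn (fun _ => True) open_true Hconn H1 H2 H3 H4 k I).
eexists. exact H.
Qed.
End SerDeriv.

Lemma RInt_not_ex (g : R -> R) a b : ~ ex_RInt g a b -> RInt g a b = 0.
Proof.
intros H. unfold RInt, iota. simpl. change (real (Lub_Rbar (fun x : R => (fun A : R -> Prop => forall y : R, is_RInt g a b y -> A y) (ball (x + 1) (mkposreal 1 Rlt_0_1)))) = 0).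
set (E := (fun x : R => (fun A : R -> Prop => forall y : R, is_RInt g a b y -> A y) (ball (x + 1) (mkposreal 1 Rlt_0_1)))).
assert (HE : forall x, E x).
{ intro x. unfold E. intros y Hy. exfalso. apply H. exists y. exact Hy. }
destruct (Lub_Rbar_correct E) as [Hub Hl].
destruct (Lub_Rbar E) as [r| |] eqn:Hr.

- exfalso. specialize (Hub (r+1) (HE _)). simpl in Hub. lra.
- reflexivity.
- exfalso. specialize (Hub 0 (HE _)). simpl in Hub. exact Hub.
Qed.

Lemma RInt_odd (g : R -> R) a : (forall x, g (- x) = - g x) -> RInt g (- a) a = 0.
Proof.
intros Hg. destruct (classic (ex_RInt g (-a) a)) as [[I HI]|HN].
- assert (H1 : is_RInt g (-a) a (opp I)).
  { apply is_RInt_swap.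
    assert (H2 : is_RInt g (- a) (- (- a)) I) by (rewrite Ropp_involutive; exact HI).
    apply is_RInt_comp_opp in H2.
    eapply is_RInt_ext; [|exact H2]. intros x _. simpl. rewrite Hg. unfold opp; simpl. unfold Rminus. ring. }
  assert (E1 : RInt g (-a) a = I) by (apply is_RInt_unique; exact HI).
  assert (E2 : RInt g (-a) a = opp I) by (apply is_RInt_unique; exact H1).
  rewrite E1 in E2 |- *. unfold opp in E2; simpl in E2. lra.
- apply RInt_not_ex; exact HN.
Qed.

Lemma Derive_even (f : R -> R) k : (forall x, f (- x) = f x) -> ex_derive f k ->
  Derive f (- k) = - Derive f k.
Proof.
intros He [l Hl].
rewrite (is_derive_unique f k l Hl).
apply is_derive_unique.
assert (H : is_derive (fun x => f (- x)) (- k) (scal (-1) l)).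
{ apply (is_derive_comp f (fun x => - x)). rewrite Ropp_involutive. exact Hl.
  auto_derive. auto. unfold scal; simpl; unfold mult; simpl. ring. }
unfold scal in H; simpl in H. unfold mult in H; simpl in H. replace (- l) with (-1 * l) by ring.
eapply is_derive_ext; [|exact H]. intro; simpl. apply He.
Qed.

Lemma exp_INR_mult n a : exp (INR n * a) = exp a ^ n.
Proof.
induction n.
- simpl. rewrite Rmult_0_l. apply exp_0.
- rewrite S_INR. replace ((INR n + 1) * a) with (INR n * a + a) by ring.
  rewrite exp_plus, IHn. simpl. ring.
Qed.

Lemma decay_summable (u : nat -> R) C l N : 0 < l -> 0 < C -> (forall n, 0 <= u n) ->
  (forall n, (N <= n)%nat -> u n <= C * exp (- INR n / l)) ->
  ex_series (fun n => (INR n + 1) * u n).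
Proof.
intros Hl HC Hu Hb.
apply (proj2 (ex_series_incr_n _ N)).
set (q := exp (- / (2 * l))).
apply (@ex_series_le R_AbsRing R_CompleteNormedModule _ (fun k => (C * (2 * l + 1)) * q ^ (N + k))).
- intro k. set (n := (N + k)%nat).
  assert (Hn : (N <= n)%nat) by (unfold n; lia).
  specialize (Hb n Hn). pose proof (Hu n).
  assert (Hx : 0 <= INR n) by apply pos_INR.
  set (x := INR n) in *.
  assert (Eq : q ^ n = exp (- x / (2 * l))).
  { unfold q, x. rewrite <- exp_INR_mult. f_equal. field. lra. }
  rewrite Eq.
  assert (E2 : exp (- x / l) = exp (- x / (2 * l)) * exp (- x / (2 * l))).
  { rewrite <- exp_plus. f_equal. field. lra. }
  rewrite E2 in Hb.
  assert (Hy := exp_ineq1_le (x / (2 * l))).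
  assert (Hinv : exp (- x / (2 * l)) * exp (x / (2 * l)) = 1).
  { rewrite <- exp_plus. replace (- x / (2 * l) + x / (2 * l)) with 0 by (field; lra). apply exp_0. }
  set (e := exp (- x / (2 * l))) in *. set (E := exp (x / (2 * l))) in *.
  assert (He : 0 < e) by apply exp_pos.
  assert (Hxe : x + 1 <= (2 * l + 1) * E).
  { assert (x / (2 * l) * (2 * l) = x) by (field; lra).
    assert (0 <= x / (2 * l)) by (apply Rdiv_le_0_compat; lra). nra. }
  assert (Hxe' : (x + 1) * e <= 2 * l + 1).
  { apply Rle_trans with ((2*l+1)*E*e). apply Rmult_le_compat_r; lra.
    rewrite Rmult_assoc, (Rmult_comm E e), Hinv. lra. }
  unfold norm; simpl. unfold abs; simpl. rewrite Rabs_pos_eq by (apply Rmult_le_pos; lra).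
  apply Rle_trans with ((x + 1) * (C * (e * e))). apply Rmult_le_compat_l; lra.
  replace ((x + 1) * (C * (e * e))) with (C * e * ((x + 1) * e)) by ring.
  replace (C * (2 * l + 1) * e) with (C * e * (2 * l + 1)) by ring.
  apply Rmult_le_compat_l. nra. exact Hxe'.
- apply (ex_series_scal (V := R_NormedModule) (C * (2 * l + 1)) (fun k => q ^ (N + k))).
  apply (proj1 (ex_series_incr_n (fun k => q ^ k) N)).
  apply ex_series_geom. unfold q. rewrite Rabs_pos_eq by (apply Rlt_le, exp_pos).
  rewrite <- exp_0. apply exp_increasing. apply Ropp_lt_gt_0_contravar. apply Rinv_0_lt_compat. lra.
Qed.

Lemma is_derive_Rmult_helper (f g : R -> R) x : ex_derive f x -> ex_derive g x -> ex_derive (fun t => f t * g t) x.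
Proof. intros H1 H2. exact (ex_derive_mult f g x H1 H2). Qed.
Lemma ex_derive_Rplus (f g : R -> R) x : ex_derive f x -> ex_derive g x -> ex_derive (fun t => f t + g t) x.
Proof. intros H1 H2. exact (ex_derive_plus f g x H1 H2). Qed.
Lemma ex_derive_Rminus (f g : R -> R) x : ex_derive f x -> ex_derive g x -> ex_derive (fun t => f t - g t) x.
Proof. intros H1 H2. exact (ex_derive_minus f g x H1 H2). Qed.
Lemma ex_derive_Rext (f g : R -> R) x : (forall t, f t = g t) -> ex_derive f x -> ex_derive g x.
Proof. intros H1 H2. exact (ex_derive_ext f g x H1 H2). Qed.
Lemma ex_derive_Rconst (c : R) x : ex_derive (fun _ => c) x.
Proof. exact (ex_derive_const c x). Qed.

Lemma continuous_Ropp (f : R -> R) x : continuous f x -> continuous (fun t => - f t) x.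
Proof. intros H. exact (continuous_opp f x H). Qed.

Definition ZS (f : Z -> R) : R :=
  Series (fun n : nat => f (Z.of_nat n)) + Series (fun n : nat => f (Z.opp (Z.of_nat (S n)))).

Definition decays (c : Z -> R) := (forall l, 0 <= c l) /\
  exists C l0 N, 0 < C /\ 0 < l0 /\
    forall l, (N <= Z.abs l)%Z -> c l <= C * exp (- IZR (Z.abs l) / l0).

Lemma dec_ser1 c : decays c -> ex_series (fun n => (INR n + 1) * c (Z.of_nat n)).
Proof.
intros [Hp [C [l0 [N [HC [Hl Hb]]]]]].
apply (decay_summable (fun n => c (Z.of_nat n)) C l0 (Z.to_nat N) Hl HC).
- intro; apply Hp.
- intros n Hn. specialize (Hb (Z.of_nat n)).
  rewrite Z.abs_eq in Hb by lia. rewrite <- INR_IZR_INZ in Hb. apply Hb. lia.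
Qed.

Lemma dec_ser2 c : decays c -> ex_series (fun n => (INR n + 1) * c (- Z.of_nat (S n))%Z).
Proof.
intros [Hp [C [l0 [N [HC [Hl Hb]]]]]].
apply (decay_summable (fun n => c (- Z.of_nat (S n))%Z) C l0 (Z.to_nat N) Hl HC).
- intro; apply Hp.
- intros n Hn. specialize (Hb (- Z.of_nat (S n))%Z).
  rewrite Z.abs_neq in Hb by lia. rewrite Z.opp_involutive, <- INR_IZR_INZ in Hb.
  eapply Rle_trans. apply Hb. lia.
  apply Rmult_le_compat_l. lra.
  assert (Hle : - INR (S n) / l0 <= - INR n / l0).
  { rewrite S_INR. unfold Rdiv. apply Rmult_le_compat_r. left; apply Rinv_0_lt_compat; lra. lra. }
  destruct Hle as [Hlt|Heq]. left; apply exp_increasing; exact Hlt. rewrite Heq; right; reflexivity.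
Qed.

Lemma ser_abs_helper (u m : nat -> R) : (forall n, 0 <= u n) -> (forall n, Rabs (m n) <= INR n + 1) ->
  ex_series (fun n => (INR n + 1) * u n) ->
  ex_series (fun n => Rabs (u n)) /\ ex_series (fun n => Rabs (u n * m n)).
Proof.
intros Hp Hm Hs. split.
- apply (@ex_series_le R_AbsRing R_CompleteNormedModule (fun n => Rabs (u n)) (fun n => (INR n + 1) * u n)); [|exact Hs].
  intro n. unfold norm; simpl; unfold abs; simpl. rewrite Rabs_Rabsolu, Rabs_pos_eq by apply Hp.
  pose proof (Hp n). pose proof (pos_INR n). nra.
- apply (@ex_series_le R_AbsRing R_CompleteNormedModule (fun n => Rabs (u n * m n)) (fun n => (INR n + 1) * u n)); [|exact Hs].
  intro n. unfold norm; simpl; unfold abs; simpl. rewrite Rabs_Rabsolu, Rabs_mult, (Rabs_pos_eq (u n)) by apply Hp.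
  pose proof (Hp n). specialize (Hm n). rewrite Rmult_comm. apply Rmult_le_compat_r; auto.
Qed.

Lemma m1_bound n : Rabs (IZR (Z.of_nat n)) <= INR n + 1.
Proof. rewrite <- INR_IZR_INZ, Rabs_pos_eq by apply pos_INR. lra. Qed.
Lemma m2_bound n : Rabs (IZR (- Z.of_nat (S n))) <= INR n + 1.
Proof. rewrite opp_IZR, <- INR_IZR_INZ, Rabs_Ropp, Rabs_pos_eq by apply pos_INR. rewrite S_INR. lra. Qed.

Lemma cos_b x : Rabs (cos x) <= 1. Proof. apply Rabs_le, COS_bound. Qed.
Lemma sin_b x : Rabs (sin x) <= 1. Proof. apply Rabs_le, SIN_bound. Qed.
Lemma msin_b x : Rabs (- sin x) <= 1. Proof. rewrite Rabs_Ropp. apply sin_b. Qed.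
Lemma mcos_b x : Rabs (- cos x) <= 1. Proof. rewrite Rabs_Ropp. apply cos_b. Qed.

Lemma Bre_deriv c k : decays c -> ex_derive (fun k => ZS (fun l => c l * cos (k * IZR l))) k.
Proof.
intros Hc. unfold ZS. apply ex_derive_Rplus.
- destruct (ser_abs_helper (fun n => c (Z.of_nat n)) (fun n => IZR (Z.of_nat n))) as [H1 H2].
  intro; apply (proj1 Hc). apply m1_bound. apply dec_ser1; auto.
  apply (ser_deriv (fun n => c (Z.of_nat n)) (fun n => IZR (Z.of_nat n)) cos (fun x => - sin x)); auto.
  apply is_derive_cos. intro; apply continuous_Ropp, continuous_sin. apply cos_b. apply msin_b.
- destruct (ser_abs_helper (fun n => c (- Z.of_nat (S n))%Z) (fun n => IZR (- Z.of_nat (S n)))) as [H1 H2].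
  intro; apply (proj1 Hc). apply m2_bound. apply dec_ser2; auto.
  apply (ser_deriv (fun n => c (- Z.of_nat (S n))%Z) (fun n => IZR (- Z.of_nat (S n))) cos (fun x => - sin x)); auto.
  apply is_derive_cos. intro; apply continuous_Ropp, continuous_sin. apply cos_b. apply msin_b.
Qed.

Lemma Bim_deriv c k : decays c -> ex_derive (fun k => ZS (fun l => - (c l * sin (k * IZR l)))) k.
Proof.
intros Hc. unfold ZS. apply ex_derive_Rplus.
- destruct (ser_abs_helper (fun n => c (Z.of_nat n)) (fun n => IZR (Z.of_nat n))) as [H1 H2].
  intro; apply (proj1 Hc). apply m1_bound. apply dec_ser1; auto.
  eapply ex_derive_Rext. 2: apply (ser_deriv (fun n => c (Z.of_nat n)) (fun n => IZR (Z.of_nat n)) (fun x => - sin x) (fun x => - cos x)); auto.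
  intro t; simpl. apply Series_ext. intro n. ring.
  intro. apply (is_derive_opp sin x (cos x)), is_derive_sin.
  intro; apply continuous_Ropp, continuous_cos. apply msin_b. apply mcos_b.
- destruct (ser_abs_helper (fun n => c (- Z.of_nat (S n))%Z) (fun n => IZR (- Z.of_nat (S n)))) as [H1 H2].
  intro; apply (proj1 Hc). apply m2_bound. apply dec_ser2; auto.
  eapply ex_derive_Rext. 2: apply (ser_deriv (fun n => c (- Z.of_nat (S n))%Z) (fun n => IZR (- Z.of_nat (S n))) (fun x => - sin x) (fun x => - cos x)); auto.
  intro t; simpl. apply Series_ext. intro n. ring.
  intro. apply (is_derive_opp sin x (cos x)), is_derive_sin.
  intro; apply continuous_Ropp, continuous_cos. apply msin_b. apply mcos_b.
Qed.

Lemma ZS_reflect (g : Z -> R) : ex_series (fun n => g (Z.of_nat n)) ->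
  ex_series (fun n => g (- Z.of_nat (S n))%Z) -> ZS (fun l => g (- l)%Z) = ZS g.
Proof.
intros H1 H2. unfold ZS.
assert (E1 : Series (fun n => g (- Z.of_nat n)%Z) = g 0%Z + Series (fun n => g (- Z.of_nat (S n))%Z)).
{ rewrite Series_incr_1. reflexivity. apply (proj2 (ex_series_incr_1 (fun n => g (- Z.of_nat n)%Z))). exact H2. }
assert (E2 : Series (fun n => g (- - Z.of_nat (S n))%Z) = Series (fun n => g (Z.of_nat (S n)))).
{ apply Series_ext. intro n. rewrite Z.opp_involutive. reflexivity. }
assert (E3 : Series (fun n => g (Z.of_nat n)) = g 0%Z + Series (fun n => g (Z.of_nat (S n)))).
{ rewrite Series_incr_1. reflexivity. exact H1. }
rewrite E1, E2, E3. ring.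
Qed.

Lemma dec_halves (c : Z -> R) (h : R -> R) : decays c -> (forall x, Rabs (h x) <= 1) ->
  forall (q : R), ex_series (fun n => c (Z.of_nat n) * h (q * IZR (Z.of_nat n))) /\
  ex_series (fun n => c (- Z.of_nat (S n))%Z * h (q * IZR (- Z.of_nat (S n))%Z)).
Proof.
intros Hc Hh q. split.
- apply (@ex_series_le R_AbsRing R_CompleteNormedModule _ (fun n => (INR n + 1) * c (Z.of_nat n))); [|apply dec_ser1; auto].
  intro n. unfold norm; simpl; unfold abs; simpl. rewrite Rabs_mult, (Rabs_pos_eq (c _)) by apply (proj1 Hc).
  pose proof (proj1 Hc (Z.of_nat n)). pose proof (pos_INR n). specialize (Hh (q * IZR (Z.of_nat n))). nra.
- apply (@ex_series_le R_AbsRing R_CompleteNormedModule _ (fun n => (INR n + 1) * c (- Z.of_nat (S n))%Z)); [|apply dec_ser2; auto].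
  intro n. pose proof (proj1 Hc (- Z.of_nat (S n))%Z). pose proof (pos_INR n). specialize (Hh (q * IZR (- Z.of_nat (S n))%Z)).
  set (cv := c (- Z.of_nat (S n))%Z) in *. set (hv := h (q * IZR (- Z.of_nat (S n))%Z)) in *.
  change (Rabs (cv * hv) <= (INR n + 1) * cv). rewrite Rabs_mult, (Rabs_pos_eq cv) by auto. nra.
Qed.

Lemma B_sym (c1 c2 : Z -> R) (h : R -> R) pa pb k : decays c2 -> 0 < pb ->
  (forall x, Rabs (h x) <= 1) ->
  (forall l, c1 l * pb = c2 (- l)%Z * pa) ->
  ZS (fun l => c1 l * h (k * IZR l)) = (pa / pb) * ZS (fun l => c2 l * h (- k * IZR l)).
Proof.
intros Hc Hpb Hh H.
set (g := fun l => c2 l * h (- k * IZR l)).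
transitivity (ZS (fun l => (pa / pb) * g (- l)%Z)).
{ assert (P : forall l, c1 l * h (k * IZR l) = pa / pb * g (- l)%Z).
  { intro l. unfold g. rewrite opp_IZR. replace (- k * - IZR l) with (k * IZR l) by ring.
    assert (Ec : c1 l = c2 (- l)%Z * pa / pb) by (apply (Rmult_eq_reg_r pb); [rewrite H; field; lra | lra]).
    rewrite Ec. field. lra. }
  unfold ZS. f_equal; apply Series_ext; intro n; apply P. }
destruct (dec_halves c2 h Hc Hh (- k)) as [E1 E2].
rewrite <- (ZS_reflect g E1 E2).
unfold ZS. rewrite !Series_scal_l. ring.
Qed.

Lemma ZS_ext f g : (forall l, f l = g l) -> ZS f = ZS g.
Proof. intros H. unfold ZS. f_equal; apply Series_ext; intro; apply H. Qed.

Lemma Bim_sym (c1 c2 : Z -> R) pa pb k : decays c2 -> 0 < pb ->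
  (forall l, c1 l * pb = c2 (- l)%Z * pa) ->
  ZS (fun l => - (c1 l * sin (k * IZR l))) = (pa / pb) * ZS (fun l => - (c2 l * sin (- k * IZR l))).
Proof.
intros Hc Hpb H.
rewrite (ZS_ext (fun l => - (c1 l * sin (k * IZR l))) (fun l => c1 l * (fun x => - sin x) (k * IZR l))) by (intro; ring).
rewrite (ZS_ext (fun l => - (c2 l * sin (- k * IZR l))) (fun l => c2 l * (fun x => - sin x) (- k * IZR l))) by (intro; ring).
exact (B_sym c1 c2 (fun x => - sin x) pa pb k Hc Hpb msin_b H).
Qed.

Close Scope R_scope.

Require Import Defs.
From Stdlib Require Import Reals ZArith Lra Lia.
From Coquelicot Require Import Coquelicot.
From mathcomp Require Import all_boot all_algebra all_fingroup.
From mathcomp Require Import Rstruct complex.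
Import ComplexField GRing.Theory.

Lemma transl_nat (D : nat) (T : ZMat D) : is_transl_inv T ->
  forall n i a j b, T (Z.add i (Z.of_nat n)) a (Z.add j (Z.of_nat n)) b = T i a j b.
Proof.
intros H n. induction n as [|n IH]; intros i a j b.
- rewrite !Z.add_0_r. reflexivity.
- rewrite Nat2Z.inj_succ -!Z.add_succ_comm -!Z.add_1_r.
  rewrite IH. rewrite H. reflexivity.
Qed.

Lemma transl_refl (D : nat) (T : ZMat D) : is_transl_inv T ->
  forall l a b, T Z0 b l a = T (Z.opp l) b Z0 a.
Proof.
intros H l a b. destruct (Z_le_gt_dec 0 l) as [Hl|Hl].
- have E := transl_nat _ _ H (Z.to_nat l) (Z.opp l) b Z0 a.
  rewrite (Z2Nat.id l Hl) in E. rewrite -E. f_equal; lia.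
- have E := transl_nat _ _ H (Z.to_nat (Z.opp l)) Z0 b l a.
  rewrite (Z2Nat.id (Z.opp l)) in E; last by lia. rewrite -E. f_equal; lia.
Qed.

Lemma decays_T (D : nat) (T : ZMat D) a b : is_local T -> is_stochastic T ->
  decays (fun l => T l a Z0 b).
Proof.
intros [C [l0 [HC [Hl [N HN]]]]] [Hp _]. split.
- intro l; apply/RleP; apply Hp.
- exists C, l0, N. split; [exact (elimT RltP HC)|split; [exact (elimT RltP Hl)|]].
  intros l Hle. have := HN l a Z0 b. rewrite Z.sub_0_r. intro H. exact (elimT RleP (H Hle)).
Qed.

Lemma re_sym (D : nat) (T : ZMat D) (pi : 'I_D -> R) k a b :
  is_local T -> is_transl_inv T -> is_stochastic T -> (forall a, Rlt 0 (pi a)) ->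
  (forall i a j b, Rmult (T i a j b) (pi b) = Rmult (T j b i a) (pi a)) ->
  Bloch_re T k a b = Rmult (Rdiv (pi a) (pi b)) (Bloch_re T (Ropp k) b a) /\
  Bloch_im T k a b = Rmult (Rdiv (pi a) (pi b)) (Bloch_im T (Ropp k) b a).
Proof.
intros Hloc Htr Hst Hpi Hdb.
have Hc := decays_T _ T b a Hloc Hst.
have Hrel : forall l, Rmult (T l a Z0 b) (pi b) = Rmult (T (Z.opp l) b Z0 a) (pi a).
{ intro l. rewrite Hdb. rewrite (transl_refl _ _ Htr). reflexivity. }
split.
- exact (B_sym (fun l => T l a Z0 b) (fun l => T l b Z0 a) cos (pi a) (pi b) k Hc (Hpi b) cos_b Hrel).
- exact (Bim_sym (fun l => T l a Z0 b) (fun l => T l b Z0 a) (pi a) (pi b) k Hc (Hpi b) Hrel).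
Qed.

From mathcomp Require Import ring.
Local Open Scope ring_scope.
Local Open Scope complex_scope.

Lemma entry_rel (D : nat) (T : ZMat D) (pi : 'I_D -> R) k a b :
  is_local T -> is_transl_inv T -> is_stochastic T -> (forall a, Rlt 0 (pi a)) ->
  (forall i a j b, Rmult (T i a j b) (pi b) = Rmult (T j b i a) (pi a)) ->
  Bloch T k a b = (pi a)%:C * Bloch T (Ropp k) b a * ((pi b)^-1)%:C.
Proof.
intros Hloc Htr Hst Hpi Hdb.
have [E1 E2] := re_sym _ T pi k a b Hloc Htr Hst Hpi Hdb.
rewrite !mxE E1 E2 /=.
set x := Bloch_re T (Ropp k) b a. set y := Bloch_im T (Ropp k) b a.
rewrite /GRing.mul /=.
congr (_ +i* _); rewrite ?RmultE ?RdivE; ring.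
Qed.

Lemma det_sym (D : nat) (T : ZMat D) (pi : 'I_D -> R) k :
  is_local T -> is_transl_inv T -> is_stochastic T -> (forall a, Rlt 0 (pi a)) ->
  (forall i a j b, Rmult (T i a j b) (pi b) = Rmult (T j b i a) (pi a)) ->
  detBloch T k = detBloch T (Ropp k).
Proof.
intros Hloc Htr Hst Hpi Hdb.
set d := \row_(a < D) (pi a)%:C.
set di := \row_(a < D) ((pi a)^-1)%:C.
have EM : Bloch T k = diag_mx d *m (Bloch T (Ropp k))^T *m diag_mx di.
{ apply/matrixP => a b. rewrite [LHS](entry_rel _ T pi k a b Hloc Htr Hst Hpi Hdb).
  rewrite mul_mx_diag mul_diag_mx !mxE. reflexivity. }
rewrite /detBloch EM !det_mulmx det_tr !det_diag.
rewrite mulrC mulrA -big_split /=.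
rewrite big1 ?mul1r //.
move=> i _. rewrite !mxE.
have Hne : pi i != 0.
{ apply/eqP => H0. have := Hpi i. rewrite H0. exact: Rlt_irrefl. }
rewrite -rmorphM /= mulVf //.
Qed.

Definition cdiff (f : R -> R[i]) := forall k,
  ex_derive (fun x => Re (f x)) k /\ ex_derive (fun x => Im (f x)) k.

Lemma cdiff_ext f g : (forall k, f k = g k) -> cdiff f -> cdiff g.
Proof.
move=> H Hf k. have [H1 H2] := Hf k. split.
- apply: (ex_derive_Rext (fun x => Re (f x))) => // t. by rewrite H.
- apply: (ex_derive_Rext (fun x => Im (f x))) => // t. by rewrite H.
Qed.

Lemma cdiff_const c : cdiff (fun _ => c).
Proof. move=> k; split; apply: ex_derive_Rconst. Qed.

Lemma ReD' (x y : R[i]) : Re (x + y) = Rplus (Re x) (Re y). Proof. by case: x; case: y. Qed.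
Lemma ImD' (x y : R[i]) : Im (x + y) = Rplus (Im x) (Im y). Proof. by case: x; case: y. Qed.
Lemma ReM' (x y : R[i]) : Re (x * y) = Rminus (Rmult (Re x) (Re y)) (Rmult (Im x) (Im y)).
Proof. by case: x; case: y. Qed.
Lemma ImM' (x y : R[i]) : Im (x * y) = Rplus (Rmult (Re x) (Im y)) (Rmult (Im x) (Re y)).
Proof. by case: x => a b; case: y => c d /=. Qed.

Lemma cdiff_add f g : cdiff f -> cdiff g -> cdiff (fun k => f k + g k).
Proof.
move=> Hf Hg k. have [F1 F2] := Hf k. have [G1 G2] := Hg k. split.
- apply: (ex_derive_Rext (fun x => Rplus (Re (f x)) (Re (g x)))); first by move=> t; rewrite ReD'.
  exact: ex_derive_Rplus.
- apply: (ex_derive_Rext (fun x => Rplus (Im (f x)) (Im (g x)))); first by move=> t; rewrite ImD'.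
  exact: ex_derive_Rplus.
Qed.

Lemma cdiff_mul f g : cdiff f -> cdiff g -> cdiff (fun k => f k * g k).
Proof.
move=> Hf Hg k. have [F1 F2] := Hf k. have [G1 G2] := Hg k. split.
- apply: (ex_derive_Rext (fun x => Rminus (Rmult (Re (f x)) (Re (g x))) (Rmult (Im (f x)) (Im (g x))))); first by move=> t; rewrite ReM'.
  apply: ex_derive_Rminus; exact: is_derive_Rmult_helper.
- apply: (ex_derive_Rext (fun x => Rplus (Rmult (Re (f x)) (Im (g x))) (Rmult (Im (f x)) (Re (g x))))); first by move=> t; rewrite ImM'.
  apply: ex_derive_Rplus; exact: is_derive_Rmult_helper.
Qed.

Lemma cdiff_sum (I : Type) (r : seq I) (P : pred I) (F : I -> R -> R[i]) :
  (forall i, cdiff (F i)) -> cdiff (fun k => \sum_(i <- r | P i) F i k).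
Proof.
move=> HF. elim: r => [|x r IH].
- apply: (cdiff_ext (fun _ => 0)); first by move=> k; rewrite big_nil.
  exact: cdiff_const.
- case Px: (P x).
  + apply: (cdiff_ext (fun k => F x k + \sum_(i <- r | P i) F i k)).
      by move=> k; rewrite big_cons Px.
    exact: cdiff_add.
  + apply: (cdiff_ext (fun k => \sum_(i <- r | P i) F i k)).
      by move=> k; rewrite big_cons Px.
    exact: IH.
Qed.

Lemma cdiff_prod (I : Type) (r : seq I) (P : pred I) (F : I -> R -> R[i]) :
  (forall i, cdiff (F i)) -> cdiff (fun k => \prod_(i <- r | P i) F i k).
Proof.
move=> HF. elim: r => [|x r IH].
- apply: (cdiff_ext (fun _ => 1)); first by move=> k; rewrite big_nil.
  exact: cdiff_const.
- case Px: (P x).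
  + apply: (cdiff_ext (fun k => F x k * \prod_(i <- r | P i) F i k)).
      by move=> k; rewrite big_cons Px.
    exact: cdiff_mul.
  + apply: (cdiff_ext (fun k => \prod_(i <- r | P i) F i k)).
      by move=> k; rewrite big_cons Px.
    exact: IH.
Qed.

Lemma cdiff_det (D : nat) (T : ZMat D) :
  is_local T -> is_stochastic T -> cdiff (detBloch T).
Proof.
move=> Hloc Hst.
apply: (cdiff_ext (fun k => \sum_(s : 'S_D) (-1) ^+ s * \prod_i Bloch T k i (s i))).
  by move=> k; rewrite /detBloch /determinant.
apply: cdiff_sum => s. apply: cdiff_mul; first exact: cdiff_const.
apply: cdiff_prod => i. move=> k; split.
- apply: (ex_derive_Rext (fun x => Bloch_re T x i (s i))); first by move=> t; rewrite mxE.
  exact: (Bre_deriv (fun l => T l i Z0 (s i)) k (decays_T _ T i (s i) Hloc Hst)).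
- apply: (ex_derive_Rext (fun x => Bloch_im T x i (s i))); first by move=> t; rewrite mxE.
  exact: (Bim_deriv (fun l => T l i Z0 (s i)) k (decays_T _ T i (s i) Hloc Hst)).
Qed.

Lemma Re_opp (z : R[i]) : Re (- z) = Ropp (Re z). Proof. by case: z. Qed.
Lemma Im_opp (z : R[i]) : Im (- z) = Ropp (Im z). Proof. by case: z. Qed.

Lemma main_aux (D : nat) (T : ZMat D) (pi : 'I_D -> R) :
  is_local T -> is_transl_inv T -> is_stochastic T -> (forall a, Rlt 0 (pi a)) ->
  (forall i a j b, Rmult (T i a j b) (pi b) = Rmult (T j b i a) (pi a)) ->
  winding0 T = 0.
Proof.
move=> Hloc Htr Hst Hpi Hdb.
have Hsym : forall k, detBloch T (Ropp k) = detBloch T k.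
  by move=> k; rewrite (det_sym _ T pi k Hloc Htr Hst Hpi Hdb).
have Hcd := cdiff_det _ T Hloc Hst.
have Hder : forall k, detBloch_deriv T (Ropp k) = - detBloch_deriv T k.
{ move=> k. have [H1 H2] := Hcd k. rewrite /detBloch_deriv.
  rewrite (Derive_even (fun k => Re (detBloch T k)) k) //; last by move=> x; rewrite Hsym.
  rewrite (Derive_even (fun k => Im (detBloch T k)) k) //; last by move=> x; rewrite Hsym. }
have Hdl : forall k, dlogdet T (Ropp k) = - dlogdet T k.
  by move=> k; rewrite /dlogdet Hder Hsym mulNr.
rewrite /winding0.
rewrite (RInt_odd (fun k => Re (dlogdet T k)) PI); last by move=> x; rewrite Hdl Re_opp.
rewrite (RInt_odd (fun k => Im (dlogdet T k)) PI); last by move=> x; rewrite Hdl Im_opp.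
by rewrite mul0r.
Qed.

Close Scope complex_scope.
Close Scope ring_scope.

Theorem mainTheorem9 (D : nat) (T : ZMat D) (pi : 'I_D -> R) :
  is_local T ->
  is_transl_inv T ->
  is_stochastic T ->
  (forall k : R, (- PI <= k <= PI)%R -> detBloch T k <> 0%R) ->
  (forall a, (0 < pi a)%R) ->
  (forall i a, Zsum_is (fun j => \sum_(b < D) T i a j b * pi b)%R (pi a)) ->
  (forall i a j b, (T i a j b * pi b = T j b i a * pi a)%R) ->
  winding0 T = 0%R.
Proof.
move=> Hloc Htr Hst _ Hpi0 _ Hdb0.
apply: (main_aux _ T pi Hloc Htr Hst).
- by move=> a; apply/RltP; exact: Hpi0.
- exact: Hdb0.
Qed.
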